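(* Let $n\ge 1$ and consider a bin $B=(l_s,u_s]\times(l_t,u_t]\subseteq[0,n]^2$ with $l_s<u_s$, $l_t<u_t$, containing $o_i\ge 1$ observed rank pairs $(s_{i1},t_{i1}),\dots,(s_{io_i},t_{io_i})\in B$. Let $e_i=(u_s-l_s)(u_t-l_t)/n$ be its expected count. For a vertical split at $c\in(l_s,u_s)$, let $o_{i-}(c)=\#\{k: s_{ik}\le c\}$, $o_{i+}(c)=o_i-o_{i-}(c)$, $e_{i-}(c)=(c-l_s)(u_t-l_t)/n$ and $e_{i+}(c)=(u_s-c)(u_t-l_t)/n$. With the chi score $\mathrm{chi}(o,e)=(o-e)^2/e$, define $$\delta_i(c,\mathrm{chi})=\mathrm{chi}\big(o_{i+}(c),e_{i+}(c)\big)+\mathrm{chi}\big(o_{i-}(c),e_{i-}(c)\big)-\mathrm{chi}(o_i,e_i).$$ Then any $c^*\in(l_s,u_s)$ maximizing $\delta_i(c,\mathrm{chi})$ over $c\in(l_s,u_s)$ is one of the point coordinates $s_{i1},\dots,s_{io_i}$. The analogous statement holds for horizontal splits at $c\in(l_t,u_t)$ (with the roles of $s$ and $t$ interchanged), where the maximizer is one of $t_{i1},\dots,t_{io_i}$.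
   Context: Observations $(x_k,y_k)$, $k=1,\dots,n$, are converted to marginal ranks $s_k,t_k\in\{1,\dots,n\}$ (ties broken randomly), so under independence the rank pairs are uniform on the rank space $[0,n]^2$ and the expected number of points in a region of area $a$ is $a/n$. A bin is a rectangle $(l_s,u_s]\times(l_t,u_t]$; splitting it by a vertical line at $c$ produces a lower bin $(l_s,c]\times(l_t,u_t]$ and an upper bin $(c,u_s]\times(l_t,u_t]$ (a point with coordinate equal to $c$ is counted in the lower bin); horizontal splits are defined analogously in the $t$ coordinate. *)

(* Defs.v *)
From mathcomp Require Import all_boot all_order all_algebra.
Set Implicit Arguments. Unset Strict Implicit. Unset Printing Implicit Defensive.
Import Order.TTheory GRing.Theory Num.Theory.
Local Open Scope ring_scope.

Definition chi (R : realFieldType) (o e : R) : R := (o - e) ^+ 2 / e.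

Definition count_le (R : realFieldType) (m : nat) (x : 'I_m -> nat) (c : R) : nat :=
  #|[pred k : 'I_m | (x k)%:R <= c]|.

(* delta_i(c, chi) for a split of the coordinate interval (l, u] at c, the other
   side of the bin having length w, with n the sample size and
   x the coordinates (in the split direction) of the m points of the bin. *)
Definition delta_chi (R : realFieldType) (n : nat) (l u w : R)
    (m : nat) (x : 'I_m -> nat) (c : R) : R :=
  let om := (count_le x c)%:R in
  let op := m%:R - om in
  let em := (c - l) * w / n%:R in
  let ep := (u - c) * w / n%:R in
  let e  := (u - l) * w / n%:R in
  chi op ep + chi om em - chi m%:R e.

Definition is_argmax_open (R : realFieldType) (f : R -> R) (l u c : R) : Prop :=
  l < c < u /\ forall c', l < c' < u -> f c' <= f c.

(* Main.v *)
Require Import Defs.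
From mathcomp Require Import all_boot all_order all_algebra.
From mathcomp Require Import ring lra.
Import Order.TTheory GRing.Theory Num.Theory.
Local Open Scope ring_scope.

Lemma chi_conv (R : realFieldType) (q e h : R) : 0 < h -> h < e ->
  chi q (e - h) + chi q (e + h) - 2 * chi q e = q ^+ 2 * (2 * h ^+ 2 / (e * (e - h) * (e + h))).
Proof.
move=> h0 he; rewrite /chi.
have e0 : e != 0 by rewrite gt_eqF //; lra.
have e1 : e - h != 0 by rewrite gt_eqF //; lra.
have e2 : e + h != 0 by rewrite gt_eqF //; lra.
by field; rewrite e0 e1 e2.
Qed.

Lemma coef_pos (R : realFieldType) (e h : R) : 0 < h -> h < e ->
  0 < 2 * h ^+ 2 / (e * (e - h) * (e + h)).
Proof.
move=> h0 he; apply: divr_gt0; first by rewrite mulr_gt0 // exprn_gt0.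
by rewrite !mulr_gt0 //; lra.
Qed.

Lemma main_gen (R : realFieldType) (n : nat) (l u w : R) (m : nat)
  (x : 'I_m -> nat) (c : R) :
  (1 <= n)%N -> 0 < w -> (1 <= m)%N ->
  is_argmax_open (delta_chi n l u w x) l u c -> exists k, c = (x k)%:R.
Proof.
move=> n1 w0 m1 [/andP[lc cu] Hmax].
case: (pickP (fun k => c == (x k)%:R)) => [k /eqP -> | H]; first by exists k.
exfalso.
set d := \big[Num.min/Num.min ((c-l)/2) ((u-c)/2)]_(k < m) (`|(x k)%:R - c| / 2).
have d0 : 0 < d.
  apply: (big_ind (fun y => 0 < y)).
  - by rewrite lt_min; apply/andP; split; lra.
  - by move=> a b a0 b0; rewrite lt_min a0 b0.
  move=> k _; apply: divr_gt0 => //; rewrite normr_gt0 subr_eq0 eq_sym.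
  by rewrite H.
have dk : forall k, d <= `|(x k)%:R - c| / 2.
  by move=> k; rewrite /d (bigD1 k) //= ge_min lexx.
have dl : d <= (c - l) / 2.
  apply: (big_rec (fun y => y <= (c - l) / 2)).
  - by rewrite ge_min lexx.
  - by move=> k y _ hy; rewrite ge_min hy orbT.
have du : d <= (u - c) / 2.
  apply: (big_rec (fun y => y <= (u - c) / 2)).
  - by rewrite ge_min lexx orbT.
  - by move=> k y _ hy; rewrite ge_min hy orbT.
have Hcnt : forall c', `|c' - c| <= d -> count_le x c' = count_le x c.
  move=> c' hc'; rewrite /count_le; apply: eq_card => k; rewrite !inE.
  have := dk k; set y := (x k)%:R => hk.
  have hk' : 2 * d <= `|y - c| by lra.
  move: hc'; rewrite ler_norml => /andP[h1 h2].
  move: hk'; rewrite ler_normr => /orP[] h3.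
    by apply/idP/idP => h; lra.
  by apply/idP/idP => h; lra.
set P := count_le x c.
set W := w / n%:R.
have W0 : 0 < W by apply: divr_gt0 => //; rewrite ltr0n.
have Ed : forall c', `|c' - c| <= d -> delta_chi n l u w x c' =
   chi (m%:R - P%:R) ((u - c) * W - (c' - c) * W) + chi P%:R ((c - l) * W + (c' - c) * W)
   - chi m%:R ((u - l) * w / n%:R).
  move=> c' hc'; rewrite /delta_chi Hcnt // /W.
  congr (chi _ _ + chi _ _ - _); rewrite !mulrA; ring.
have hp : `|(c + d) - c| <= d by rewrite addrC addKr ger0_norm // ltW.
have hm : `|(c - d) - c| <= d by rewrite addrC addKr normrN ger0_norm // ltW.
have h0 : `|c - c| <= d by rewrite subrr normr0 ltW.
have := Hmax (c + d); rewrite Ed //.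
have := Hmax (c - d); rewrite Ed //.
rewrite (Ed c) // subrr mul0r subr0 addr0.
have -> : (c - d - c) * W = - (d * W) by ring.
have -> : (c + d - c) * W = d * W by ring.
rewrite !opprK.
have dW : 0 < d * W by rewrite mulr_gt0.
have hA : d * W < (c - l) * W by rewrite ltr_pM2r //; lra.
have hB : d * W < (u - c) * W by rewrite ltr_pM2r //; lra.
have eB := @chi_conv _ (m%:R - P%:R) _ _ dW hB.
have eA := @chi_conv _ P%:R _ _ dW hA.
have cA := @coef_pos _ _ _ dW hA.
have cB := @coef_pos _ _ _ dW hB.
set K := chi m%:R _.
move=> i1 i2.
have : (m%:R - P%:R) ^+ 2 * (2 * (d * W) ^+ 2 / ((u - c) * W * ((u - c) * W - d * W) * ((u - c) * W + d * W)))
  + P%:R ^+ 2 * (2 * (d * W) ^+ 2 / ((c - l) * W * ((c - l) * W - d * W) * ((c - l) * W + d * W))) <= 0.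
  rewrite -eB -eA; lra.
apply/negP; rewrite -ltNge.
have Pm : (P <= m)%N by rewrite /P /count_le; apply: (leq_trans (max_card _)); rewrite card_ord.
case: (posnP P) => [P0 | Pp].
  rewrite P0 subr0 expr0n /= mul0r addr0; apply: mulr_gt0 => //.
  by rewrite exprn_gt0 // ltr0n.
apply: ltr_pwDr; first by rewrite mulr_gt0 // exprn_gt0 // ltr0n.
by rewrite mulr_ge0 // ?sqr_ge0 // ltW.
Qed.

Theorem proposition1 (R : realFieldType) (n : nat) (ls us lt ut : R)
    (o : nat) (s t : 'I_o -> nat) :
  (1 <= n)%N ->
  0 <= ls -> ls < us -> us <= n%:R ->
  0 <= lt -> lt < ut -> ut <= n%:R ->
  (1 <= o)%N ->
  (* rank pairs: ranks in {1,...,n}, distinct marginal ranks *)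
  (forall k, (1 <= s k <= n)%N /\ (1 <= t k <= n)%N) ->
  injective s -> injective t ->
  (* all points lie in the bin (ls, us] x (lt, ut] *)
  (forall k, ls < (s k)%:R <= us /\ lt < (t k)%:R <= ut) ->
  (forall cstar : R,
     is_argmax_open (delta_chi n ls us (ut - lt) s) ls us cstar ->
     exists k, cstar = (s k)%:R) /\
  (forall cstar : R,
     is_argmax_open (delta_chi n lt ut (us - ls) t) lt ut cstar ->
     exists k, cstar = (t k)%:R).
Proof.
move=> n1 _ lsu _ _ ltu _ o1 _ _ _ _; split => c hc.
  by apply: (main_gen _ _ _ _ _ _ _ _ n1 _ o1 hc); rewrite subr_gt0.
by apply: (main_gen _ _ _ _ _ _ _ _ n1 _ o1 hc); rewrite subr_gt0.
Qed.
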